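(* Run UBEV-S on a contextual-bandit MDP $\mathcal M_C$ (see context). Outside of the failure event, UBEV-S has at most $\tilde O\!\left(\frac{SAH}{\mu_{\min}}\right)$ non-good episodes, where $\mu_{\min}=\min_s\mu(s)$.
   Context: $\mathcal M_C$ is a finite-horizon episodic MDP (finite state set with $S$ states, $A$ actions, horizon $H$, mean rewards in $[0,1]$) whose transitions satisfy $p(s'\mid s,a)=\mu(s')$ for all $s,a$, for a fixed distribution $\mu$ on states with $\mu_{\min}=\min_s\mu(s)>0$. UBEV-S (failure tolerance $\delta\in(0,1]$) is an optimistic algorithm that in each episode $k$ plays a policy $\pi_k$ mapping (state, timestep) to actions; $n_k(s,a)$ is the total number of visits to $(s,a)$ (aggregated over timesteps) before episode $k$; $w_{tk}(s,a)$ is the probability, in episode $k$ under $\pi_k$, of being in state $s$ at step $t$ and taking $a$. Outside of the failure event, in particular, $n_k(s,a)\ge\frac12\sum_{i<k}\sum_{t\in[H]}w_{ti}(s,a)-H\ln\frac{9SA}{\delta}$ for all $k,s,a$. Episode $k$ is good if the failure event does not occur and $n_k(s,\pi_k(s,t))\ge\frac14\sum_{i<k}\sum_{\tau\in[H]}w_{\tau i}(s,\pi_k(s,t))$ for all states $s$ and timesteps $t$; otherwise it is non-good. $\tilde O(\cdot)$ hides constants and factors polylogarithmic in quantities polynomial in $S,A,H,K,1/\delta$. *)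

(* Defs.v *)
From HB Require Import structures.
From mathcomp Require Import all_boot all_order all_algebra.
From mathcomp Require Import all_classical all_reals all_analysis.
Set Implicit Arguments. Unset Strict Implicit. Unset Printing Implicit Defensive.
Import Order.TTheory GRing.Theory Num.Theory.
Local Open Scope ring_scope.

(* Finite-horizon episodic MDP with finite state type S, action type A,
   horizon H (timesteps 0 .. H-1), initial state distribution p0 and
   transition kernel P s a s'. *)

Fixpoint state_dist (R : realType) (S A : finType) (p0 : S -> R)
    (P : S -> A -> S -> R) (pi : S -> nat -> A) (t : nat) : S -> R :=
  match t with
  | 0 => p0
  | t'.+1 => fun s' => \sum_(s : S)
       state_dist p0 P pi t' s * P s (pi s t') s'
  end.

Definition occ (R : realType) (S A : finType) (p0 : S -> R)
    (P : S -> A -> S -> R) (pi : S -> nat -> A) (t : nat) (s : S) (a : A) : R :=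
  state_dist p0 P pi t s * (if pi s t == a then 1 else 0).

Definition cum_occ (R : realType) (S A : finType) (H : nat) (p0 : S -> R)
    (P : S -> A -> S -> R) (pis : nat -> S -> nat -> A) (k : nat)
    (s : S) (a : A) : R :=
  \sum_(i < k) \sum_(tau < H) occ p0 P (pis i) tau s a.

Definition good_episode (R : realType) (S A : finType) (H : nat) (p0 : S -> R)
    (P : S -> A -> S -> R) (pis : nat -> S -> nat -> A)
    (n : nat -> S -> A -> nat) (k : nat) : bool :=
  [forall s : S, forall t : 'I_H,
     (n k s (pis k s t))%:R >= 4^-1 * cum_occ H p0 P pis k s (pis k s t)].

(* Main.v *)
Require Import Defs.
From HB Require Import structures.
From mathcomp Require Import all_boot all_order all_algebra.
From mathcomp Require Import all_classical all_reals all_analysis.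
From mathcomp Require Import ring lra.
Import Order.TTheory GRing.Theory Num.Theory.
Local Open Scope ring_scope.

Lemma state_dist_mu (R : realType) (S A : finType) (mu : S -> R) p0
  (P : S -> A -> S -> R) pi :
  \sum_(s : S) mu s = 1 -> (forall s a s', P s a s' = mu s') ->
  (forall s, p0 s = mu s) -> forall t s, state_dist p0 P pi t s = mu s.
Proof.
move=> hsum hP hp0; elim=> [|t IH] s /=; first by rewrite hp0.
under eq_bigr => s' _ do rewrite IH hP.
by rewrite -mulr_suml hsum mul1r.
Qed.

Lemma count_lemma (R : realType) (f : nat -> R) (Pk : nat -> bool) (M m : R) :
  0 <= f 0 -> 0 <= M + m -> (forall k, f k <= f k.+1) ->
  (forall k, Pk k -> f k < M /\ f k + m <= f k.+1) ->
  forall K, \sum_(k < K) (if Pk k then m else 0) <= f K /\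
            \sum_(k < K) (if Pk k then m else 0) <= M + m.
Proof.
move=> f0 Mm fi fP; elim=> [|K [IH1 IH2]]; first by rewrite big_ord0.
rewrite big_ord_recr /=; case: ifP => hP.
  have [h1 h2] := fP K hP; split; lra.
rewrite addr0; split => //; exact: le_trans IH1 (fi K).
Qed.

Theorem lemma11 (R : realType) :
  exists C : R, 0 < C /\
  forall (S A : finType) (H : nat) (delta : R)
         (mu : S -> R) (mu_min : R)
         (p0 : S -> R) (P : S -> A -> S -> R)
         (pis : nat -> S -> nat -> A) (n : nat -> S -> A -> nat),
    (0 < H)%N ->
    0 < delta <= 1 ->
    (forall s, 0 <= mu s) -> \sum_(s : S) mu s = 1 ->
    (forall s, mu_min <= mu s) -> (exists s, mu s = mu_min) -> 0 < mu_min ->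
    (forall s a s', P s a s' = mu s') ->
    (forall s, p0 s = mu s) ->
    (forall k s a,
       (n k s a)%:R >= 2^-1 * cum_occ H p0 P pis k s a
                       - H%:R * ln (9 * #|S|%:R * #|A|%:R / delta)) ->
    forall K : nat,
      #|[set k : 'I_K | ~~ good_episode H p0 P pis n k]|%:R
        <= C * (#|S|%:R * #|A|%:R * H%:R / mu_min)
             * ln (9 * #|S|%:R * #|A|%:R / delta).
Proof.
exists 6; split; first by [].
move=> S A H delta mu m p0 P pis n H0 /andP[d0 d1] mu0 musum mmin [s0 hs0] m0
  hP hp0 hfail K.
set L := ln _.
set c := fun k s a => cum_occ H p0 P pis k s a.
have hocc : forall i t s a, occ p0 P (pis i) t s a
    = mu s * (if pis i s t == a then 1 else 0).
  by move=> i t s a; rewrite /occ (state_dist_mu _ _ _ _ _ _ _ musum hP hp0).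
have cS : forall k s a, c k.+1 s a = c k s a +
    \sum_(tau < H) mu s * (if pis k s tau == a then 1 else 0).
  move=> k s a; rewrite /c /cum_occ big_ord_recr /=.
  by congr (_ + _); apply: eq_bigr => t _; rewrite hocc.
have inc_ge0 : forall k s a,
    0 <= \sum_(tau < H) mu s * (if pis k s tau == a then 1 else 0).
  move=> k s a; apply: sumr_ge0 => t _; apply: mulr_ge0 => //; by case: ifP.
have c0 : forall s a, c 0%N s a = 0 by move=> s a; rewrite /c /cum_occ big_ord0.
have m1 : m <= 1.
  rewrite -musum -hs0 (bigD1 s0) //= lerDl; exact: sumr_ge0.
have Sgt0 : (0 < #|S|)%N by apply/card_gt0P; exists s0.
have Agt0 : (0 < #|A|)%N by apply/card_gt0P; exists (pis 0%N s0 0%N).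
have SR : (1 : R) <= #|S|%:R by rewrite ler1n.
have AR : (1 : R) <= #|A|%:R by rewrite ler1n.
have HR : (1 : R) <= H%:R by rewrite ler1n.
have L12 : 2^-1 <= L.
  have ln9 : 2^-1 <= ln (9 : R).
    have := @le_ln1Dx R (- (8/9)) ltac:(lra).
    have -> : 1 + - (8/9) = (9 : R)^-1 by lra.
    rewrite lnV ?posrE //; lra.
  apply: le_trans ln9 _; rewrite /L ler_ln ?posrE //.
  - rewrite ler_pdivlMr //; nra.
  - apply: divr_gt0 => //; nra.
set M := 4 * H%:R * L.
pose Pk (p : S * A) k := (c k p.1 p.2 < M) && [exists t : 'I_H, pis k p.1 t == p.2].
have cnt : forall p : S * A,
    \sum_(k < K) (if Pk p k then m else 0) <= M + m.
  move=> [s a].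
  have [] := @count_lemma R (fun k => c k s a) (Pk (s, a)) M m _ _ _ _ K => //.
  - by rewrite c0.
  - rewrite /M; nra.
  - by move=> k; rewrite cS lerDl.
  move=> k /andP[hlt /existsP[t /eqP ht]]; split => //.
  rewrite cS lerD2l (bigD1 t) //= ht eqxx mulr1.
  apply: le_trans (mmin s) _; rewrite lerDl; apply: sumr_ge0 => tau _.
  apply: mulr_ge0 => //; by case: ifP.
have step : forall k : 'I_K,
    (if ~~ good_episode H p0 P pis n k then m else 0)
      <= \sum_(p : S * A) (if Pk p k then m else 0).
  move=> k; case: ifP => hg; last first.
    by apply: sumr_ge0 => p _; case: ifP => // _; exact: ltW.
  move: hg; rewrite negb_forall => /existsP[s]; rewrite negb_forall => /existsP[t].
  rewrite -ltNge => hlt.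
  have hf := hfail k s (pis k s t).
  rewrite (bigD1 (s, pis k s t)) //= ifT; last first.
    apply/andP; split; last by apply/existsP; exists t.
    rewrite /M /c /=; move: hlt hf; rewrite -/L; set X := cum_occ _ _ _ _ _ _ _; set Y := (n _ _ _)%:R; move=> hlt hf; lra.
  rewrite lerDl; apply: sumr_ge0 => p _; case: ifP => // _; exact: ltW.
have tot : #|[set k : 'I_K | ~~ good_episode H p0 P pis n k]|%:R * m
    <= #|S|%:R * #|A|%:R * (M + m).
  have -> : #|[set k : 'I_K | ~~ good_episode H p0 P pis n k]|%:R * m
      = \sum_(k < K) (if ~~ good_episode H p0 P pis n k then m else 0).
    rewrite -sumr_const mulr_suml big_mkcond /=.
    by apply: eq_bigr => k _; rewrite inE; case: ifP; rewrite ?mul1r ?mul0r.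
  apply: le_trans (ler_sum _ (fun k _ => step k)) _.
  rewrite exchange_big /=.
  apply: le_trans (ler_sum _ (fun p _ => cnt p)) _.
  rewrite sumr_const (_ : #|_| = #|S| * #|A|)%N; last by rewrite -card_prod; apply: eq_card.
  by rewrite -natrM mulr_natl.
rewrite -ler_pdivlMr // in tot; apply: le_trans tot _.
have -> : 6 * (#|S|%:R * #|A|%:R * H%:R / m) * L
    = (6 * (#|S|%:R * #|A|%:R) * H%:R * L) / m.
  by rewrite !mulrA; ring.
rewrite ler_pM2r ?invr_gt0 // /M.
have hSA : 1 <= #|S|%:R * #|A|%:R :> R by nra.
have hHL : 2^-1 <= H%:R * L by nra.
have : 0 <= (#|S|%:R * #|A|%:R) * (2 * (H%:R * L) - m) by apply: mulr_ge0; lra.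
lra.
Qed.
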